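(* Let $\mathcal Z$ be a finite zero-set and $a,b\in\{1,2,\dots\}\cup\{\infty\}$. If $A'$ spans for the zero-set $\mathcal Z\cap R_{a,b}$, then there exists $A\supseteq A'$ which spans for $\mathcal Z$ and satisfies $|A|=|A'|+|\mathcal Z\setminus R_{a,b}|$; moreover, if $A'$ is thin, $A$ can be chosen thin. Consequently $$\gamma(\mathcal Z\cap R_{a,b})\ge\gamma(\mathcal Z)-|\mathcal Z\setminus R_{a,b}|,\qquad \gamma_{\rm thin}(\mathcal Z\cap R_{a,b})\ge\gamma_{\rm thin}(\mathcal Z)-|\mathcal Z\setminus R_{a,b}|.$$
   Context: $\mathbb Z_+=\{0,1,2,\dots\}$, $R_{a,b}=([0,a-1]\times[0,b-1])\cap\mathbb Z_+^2$, where $[0,\infty-1]$ means $[0,\infty)$. A zero-set is a union of rectangles $R_{a,b}$. $\mathrm{row}(x,A),\mathrm{col}(x,A)$ count the points of $A$ on the horizontal/vertical line through $x$; for a zero-set $\mathcal Z$, $\mathcal T(A)=A\cup\{x\notin A:(\mathrm{row}(x,A),\mathrm{col}(x,A))\notin\mathcal Z\}$; $A$ spans for $\mathcal Z$ if $\bigcup_t\mathcal T^t(A)=\mathbb Z_+^2$; $\gamma(\mathcal Z)$ is the minimal size of a finite spanning set. A set is thin if each of its points has no other point of the set on its horizontal line or no other point of the set on its vertical line; $\gamma_{\rm thin}(\mathcal Z)$ is the minimal size of a thin spanning set. *)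

(* Defs.v *)
(* Points of Z_+^2 are pairs (nat * nat); sets are Prop predicates;
   finite sets are duplicate-free lists. *)
From Stdlib Require Import List Arith.
Import ListNotations.

Definition pt := (nat * nat)%type.
Definition pset := pt -> Prop.

(* Extended positive naturals {1,2,...} ∪ {∞}: [Some n] is n (required n >= 1), [None] is ∞. *)
Definition extpos := option nat.
Definition valid_ext (a : extpos) : Prop :=
  match a with Some n => 1 <= n | None => True end.

(* k <= a - 1, i.e. k < a, with ∞ - 1 = ∞ *)
Definition below (k : nat) (a : extpos) : Prop :=
  match a with Some n => k < n | None => True end.

Definition rect (a b : extpos) : pset := fun x => below (fst x) a /\ below (snd x) b.

Definition is_zero_set (Z : pset) : Prop :=
  exists (I : Type) (ab : I -> extpos * extpos),
    (forall i, valid_ext (fst (ab i)) /\ valid_ext (snd (ab i))) /\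
    (forall x, Z x <-> exists i, rect (fst (ab i)) (snd (ab i)) x).

Definition card_is (P : pset) (n : nat) : Prop :=
  exists l : list pt, NoDup l /\ (forall x, In x l <-> P x) /\ length l = n.

Definition finite_set (P : pset) : Prop := exists n, card_is P n.

Definition setI (P Q : pset) : pset := fun x => P x /\ Q x.
Definition setD (P Q : pset) : pset := fun x => P x /\ ~ Q x.

(* row(x,A) = r : the horizontal line through x = (i,j), i.e. {(k,j)},
   contains exactly r points of A (finitely many). *)
Definition row_is (A : pset) (x : pt) (r : nat) : Prop :=
  exists l : list nat, NoDup l /\ (forall k, In k l <-> A (k, snd x)) /\ length l = r.
(* col(x,A) = c : the vertical line through x = (i,j), i.e. {(i,k)}. *)
Definition col_is (A : pset) (x : pt) (c : nat) : Prop :=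
  exists l : list nat, NoDup l /\ (forall k, In k l <-> A (fst x, k)) /\ length l = c.

(* (row(x,A), col(x,A)) ∈ Z; if a count is infinite the pair is not in Z ⊆ Z_+^2. *)
Definition counts_in (Z : pset) (A : pset) (x : pt) : Prop :=
  exists r c, row_is A x r /\ col_is A x c /\ Z (r, c).

Definition Tstep (Z : pset) (A : pset) : pset :=
  fun x => A x \/ (~ A x /\ ~ counts_in Z A x).

Fixpoint Titer (Z : pset) (t : nat) (A : pset) : pset :=
  match t with
  | O => A
  | S t' => Tstep Z (Titer Z t' A)
  end.

Definition spans (Z : pset) (A : pset) : Prop := forall x, exists t, Titer Z t A x.

Definition lset (l : list pt) : pset := fun x => In x l.

Definition thin (A : pset) : Prop :=
  forall x, A x ->
    (forall y, A y -> snd y = snd x -> y = x) \/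
    (forall y, A y -> fst y = fst x -> y = x).

Definition is_gamma (Z : pset) (g : nat) : Prop :=
  (exists A, card_is A g /\ spans Z A) /\
  (forall A n, card_is A n -> spans Z A -> g <= n).

Definition is_gamma_thin (Z : pset) (g : nat) : Prop :=
  (exists A, card_is A g /\ thin A /\ spans Z A) /\
  (forall A n, card_is A n -> thin A -> spans Z A -> g <= n).

(* Main.v *)
Require Import Defs.
From Stdlib Require Import List Arith.
From Stdlib Require Import Lia Classical ClassicalEpsilon FinFun.
Import ListNotations.


Lemma sublist_exists {T} (l : list T) (P : T -> Prop) :
  NoDup l -> (forall x, P x -> In x l) ->
  exists l2, NoDup l2 /\ (forall x, In x l2 <-> P x) /\ length l2 <= length l.
Proof.
  intros Hn HP.
  exists (filter (fun x => if excluded_middle_informative (P x) then true else false) l).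
  split; [apply NoDup_filter; auto|split].
  - intros x; rewrite filter_In. destruct (excluded_middle_informative (P x)); split; intuition; discriminate.
  - apply filter_length_le.
Qed.

Lemma len_unique {T} (l1 l2 : list T) : NoDup l1 -> NoDup l2 ->
  (forall x, In x l1 <-> In x l2) -> length l1 = length l2.
Proof. intros H1 H2 H. apply Nat.le_antisymm; apply NoDup_incl_length; auto; intros x Hx; apply H; auto. Qed.

Lemma row_unique S x r1 r2 : row_is S x r1 -> row_is S x r2 -> r1 = r2.
Proof. intros [l1 [N1 [I1 L1]]] [l2 [N2 [I2 L2]]]. subst. apply len_unique; auto.
  intros k; rewrite I1, I2; tauto. Qed.
Lemma col_unique S x r1 r2 : col_is S x r1 -> col_is S x r2 -> r1 = r2.
Proof. intros [l1 [N1 [I1 L1]]] [l2 [N2 [I2 L2]]]. subst. apply len_unique; auto.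
  intros k; rewrite I1, I2; tauto. Qed.

Lemma row_mono (S S' : pset) x r' : (forall y, S y -> S' y) -> row_is S' x r' ->
  exists r, row_is S x r /\ r <= r'.
Proof. intros HS [l [Hn [Hi Hl]]].
  destruct (sublist_exists l (fun k => S (k, snd x)) Hn) as [l2 [N2 [I2 L2]]].
  { intros k Hk. apply Hi. auto. }
  exists (length l2). split; [exists l2; auto| lia]. Qed.
Lemma col_mono (S S' : pset) x r' : (forall y, S y -> S' y) -> col_is S' x r' ->
  exists r, col_is S x r /\ r <= r'.
Proof. intros HS [l [Hn [Hi Hl]]].
  destruct (sublist_exists l (fun k => S (fst x, k)) Hn) as [l2 [N2 [I2 L2]]].
  { intros k Hk. apply Hi. auto. }
  exists (length l2). split; [exists l2; auto| lia]. Qed.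

Lemma row_le (S S' : pset) x r r' : (forall y, S y -> S' y) -> row_is S x r -> row_is S' x r' -> r <= r'.
Proof. intros HS [l [Hn [Hi Hl]]] [l' [Hn' [Hi' Hl']]]. subst.
  apply NoDup_incl_length; auto. intros k Hk. apply Hi', HS, Hi, Hk. Qed.
Lemma col_le (S S' : pset) x r r' : (forall y, S y -> S' y) -> col_is S x r -> col_is S' x r' -> r <= r'.
Proof. intros HS [l [Hn [Hi Hl]]] [l' [Hn' [Hi' Hl']]]. subst.
  apply NoDup_incl_length; auto. intros k Hk. apply Hi', HS, Hi, Hk. Qed.

Lemma counts_ext Z (S S' : pset) x : (forall y, S y <-> S' y) -> counts_in Z S x -> counts_in Z S' x.
Proof. intros HS [r [c [[l [Hn [Hi Hl]]] [[l' [Hn' [Hi' Hl']]] HZ]]]].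
  exists r, c; split; [|split; auto].
  - exists l; repeat split; auto; intros H; [apply HS, Hi, H| apply Hi, HS, H].
  - exists l'; repeat split; auto; intros H; [apply HS, Hi', H| apply Hi', HS, H].
Qed.

Lemma Titer_ext Z (A A' : pset) : (forall y, A y <-> A' y) -> forall t y, Titer Z t A y <-> Titer Z t A' y.
Proof. intros HA t; induction t; simpl; intros y; auto.
  unfold Tstep. split.
  - intros [H|[H1 H2]]; [left; apply IHt; auto|right; split].
    + rewrite <- IHt; auto.
    + intro Hc; apply H2. eapply counts_ext; [|exact Hc]. intros; rewrite IHt; tauto.
  - intros [H|[H1 H2]]; [left; apply IHt; auto|right; split].
    + rewrite IHt; auto.
    + intro Hc; apply H2. eapply counts_ext; [|exact Hc]. intros; rewrite IHt; tauto.
Qed.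

Lemma spans_ext Z (A A' : pset) : (forall y, A y <-> A' y) -> spans Z A -> spans Z A'.
Proof. intros HA Hs x. destruct (Hs x) as [t Ht]. exists t. apply (Titer_ext Z A A' HA); auto. Qed.

Lemma Titer_mono Z A t t' y : t <= t' -> Titer Z t A y -> Titer Z t' A y.
Proof. induction 1; auto. intros Hy. simpl. left. auto. Qed.

Definition clo Z A : pset := fun x => exists t, Titer Z t A x.

Lemma rel_max (P : nat -> nat -> Prop) K : (forall t v, P t v -> v < K) -> (exists t v, P t v) ->
  exists t v, P t v /\ forall t' v', P t' v' -> v' <= v.
Proof.
  revert P. induction K; intros P Hb He.
  - destruct He as [t [v H]]. apply Hb in H. lia.
  - destruct (classic (exists t, P t K)) as [[t Ht]|Hn].
    + exists t, K. split; auto. intros t' v' H. apply Hb in H. lia.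
    + apply IHK; auto. intros t v H. assert (v <> K) by (intro; subst; eauto). apply Hb in H. lia.
Qed.

Lemma clo_closed Z A K : (forall r c, Z (r,c) -> r < K /\ c < K) ->
  forall x, ~ clo Z A x -> counts_in Z (clo Z A) x.
Proof.
  intros HK x Hx.
  assert (Hc : forall t, counts_in Z (Titer Z t A) x).
  { intros t. apply NNPP. intro Hn. apply Hx. exists (S t). simpl. unfold Tstep.
    destruct (classic (Titer Z t A x)); auto. }
  destruct (rel_max (fun t v => row_is (Titer Z t A) x v) K) as [t1 [v1 [H1 M1]]].
  { intros t v Hv. destruct (Hc t) as [r [c [Hr [_ HZ]]]]. rewrite (row_unique _ _ _ _ Hv Hr). apply (HK _ _ HZ). }
  { destruct (Hc 0) as [r [c [Hr _]]]. eauto. }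
  destruct (rel_max (fun t v => col_is (Titer Z t A) x v) K) as [t2 [v2 [H2 M2]]].
  { intros t v Hv. destruct (Hc t) as [r [c [_ [Hr HZ]]]]. rewrite (col_unique _ _ _ _ Hv Hr). apply (HK _ _ HZ). }
  { destruct (Hc 0) as [r [c [_ [Hr _]]]]. eauto. }
  set (T := Nat.max t1 t2).
  destruct (Hc T) as [r [c [HrT [HcT HZ]]]].
  assert (v1 <= r) by (eapply row_le; [|exact H1|exact HrT]; intros y; apply Titer_mono; lia).
  assert (v2 <= c) by (eapply col_le; [|exact H2|exact HcT]; intros y; apply Titer_mono; lia).
  exists r, c. split; [|split; auto].
  - destruct HrT as [l [Hn [Hi Hl]]]. exists l. repeat split; auto.
    + intros Hk. exists T. apply Hi; auto.
    + intros [s Hs]. set (T' := Nat.max T s).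
      destruct (Hc T') as [r' [c' [Hr' _]]].
      pose proof (M1 _ _ Hr') as Hle.
      destruct Hr' as [l' [Hn' [Hi' Hl']]].
      assert (Hinc : incl l' l).
      { apply NoDup_length_incl; auto; [lia|]. intros k0 Hk0. apply Hi'. apply (Titer_mono _ _ T); [lia|]. apply Hi; auto. }
      apply Hinc. apply Hi'. apply (Titer_mono _ _ s); [lia|auto].
  - destruct HcT as [l [Hn [Hi Hl]]]. exists l. repeat split; auto.
    + intros Hk. exists T. apply Hi; auto.
    + intros [s Hs]. set (T' := Nat.max T s).
      destruct (Hc T') as [r' [c' [_ [Hr' _]]]].
      pose proof (M2 _ _ Hr') as Hle.
      destruct Hr' as [l' [Hn' [Hi' Hl']]].
      assert (Hinc : incl l' l).
      { apply NoDup_length_incl; auto; [lia|]. intros k0 Hk0. apply Hi'. apply (Titer_mono _ _ T); [lia|]. apply Hi; auto. }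
      apply Hinc. apply Hi'. apply (Titer_mono _ _ s); [lia|auto].
Qed.

Definition sw (N N' i : nat) := if Nat.eqb i N then N' else if Nat.eqb i N' then N else i.
Definition swp N N' (x : pt) : pt := (sw N N' (fst x), snd x).

Lemma sw_inv N N' i : sw N N' (sw N N' i) = i.
Proof. unfold sw. destruct (Nat.eqb_spec i N) as [e|e]; destruct (Nat.eqb_spec i N') as [e'|e'];
  repeat match goal with |- context [Nat.eqb ?x ?y] => destruct (Nat.eqb_spec x y) end; lia. Qed.

Lemma counts_swap Z (S : pset) N N' x : (forall y, S y <-> S (swp N N' y)) ->
  counts_in Z S x -> counts_in Z S (swp N N' x).
Proof. intros HS [r [c [Hr [[l [Hn [Hi Hl]]] HZ]]]]. exists r, c. split; [exact Hr|split; auto].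
  exists l. split; auto. split; auto. intros k. rewrite Hi. destruct x as [i j]. simpl.
  rewrite (HS (i,k)). unfold swp. simpl. tauto. Qed.

Lemma Titer_swap Z (A : pset) N N' : (forall y, A y <-> A (swp N N' y)) ->
  forall t y, Titer Z t A y <-> Titer Z t A (swp N N' y).
Proof. intros HA t; induction t; simpl; intros y; auto.
  assert (Hy : swp N N' (swp N N' y) = y).
  { destruct y; unfold swp; simpl; rewrite sw_inv; auto. }
  unfold Tstep. split.
  - intros [H|[H1 H2]]; [left; apply (proj1 (IHt y)); auto|right; split].
    + intro Hc; apply H1. rewrite <- Hy. apply (proj1 (IHt _)); auto.
    + intro Hc; apply H2. rewrite <- Hy. apply counts_swap; auto.
  - intros [H|[H1 H2]]; [left; rewrite <- Hy; apply (proj1 (IHt _)); auto|right; split].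
    + intro Hc; apply H1; apply (proj1 (IHt _)); auto.
    + intro Hc; apply H2. apply counts_swap; auto.
Qed.

Lemma fresh_inv (A : pset) N N' : (forall y, A y -> fst y < N) -> N <= N' ->
  forall y, A y <-> A (swp N N' y).
Proof. intros HA HN [i j]. unfold swp, sw; simpl.
  destruct (Nat.eqb_spec i N); destruct (Nat.eqb_spec i N'); subst; split; intros H;
  try (apply HA in H; simpl in H; lia); auto. Qed.

Lemma stepV (Y1 Y2 A : pset) (a m N K : nat) :
  (forall r c r' c', Y2 (r,c) -> r' <= r -> c' <= c -> Y2 (r',c')) ->
  (forall r c, Y2 (r,c) -> r < K /\ c < K) ->
  (forall r c, Y2 (r,c) -> ~ Y1 (r,c) -> a <= r) ->
  (forall r c, Y2 (r,c) -> r <= a) ->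
  (forall c, Y2 (a,c) -> c < m) ->
  (forall x, A x -> fst x < N) ->
  spans Y1 A ->
  spans Y2 (fun x => A x \/ (fst x = N /\ N <= snd x < N + m)).
Proof.
  intros Hdown HK H2 H3 H4 HA Hsp.
  set (AB := fun x => A x \/ (fst x = N /\ N <= snd x < N + m)).
  set (C := clo Y2 AB).
  assert (Hcl := clo_closed Y2 AB K HK).
  assert (Claim : forall t x, Titer Y1 t A x -> C x).
  { induction t; intros x Hx.
    - exists 0. left. auto.
    - simpl in Hx. destruct Hx as [Hx|[Hnx Hnc]]; [auto|].
      destruct (classic (C x)) as [|HnC]; auto. exfalso.
      destruct (Hcl x HnC) as [r' [c' [Hr' [Hc' HY]]]].
      destruct (row_mono (Titer Y1 t A) C x r' IHt Hr') as [r [Hr Hrr]].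
      destruct (col_mono (Titer Y1 t A) C x c' IHt Hc') as [c [Hc Hcc]].
      assert (HYrc : Y2 (r,c)) by (eapply Hdown; eauto).
      assert (HnY : ~ Y1 (r,c)) by (intro; apply Hnc; exists r, c; auto).
      pose proof (H2 _ _ HYrc HnY). pose proof (H3 _ _ HY).
      assert (Ca : C (N, snd x)).
      { destruct (classic (C (N, snd x))) as [|Hn]; auto. exfalso.
        destruct (Hcl _ Hn) as [r'' [c'' [Hr'' [Hc'' HY'']]]].
        assert (r'' = r') by (eapply row_unique; [exact Hr''| exact Hr']). subst r''.
        destruct Hc'' as [lc [Hn' [Hi' Hl']]].
        assert (m <= c'').
        { rewrite <- Hl'. rewrite <- (length_seq m N). apply NoDup_incl_length; [apply seq_NoDup|].
          intros k Hk. apply in_seq in Hk. apply Hi'. exists 0. simpl. right. simpl. split; auto; lia. }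
        assert (r' = a) by lia. subst r'. apply H4 in HY''. lia. }
      destruct Hr as [lS [NS [IS LS]]]. destruct Hr' as [lC [NC [IC LC]]].
      assert (incl lC lS).
      { apply NoDup_length_incl; auto; [lia|]. intros k Hk. apply IC, IHt, IS, Hk. }
      assert (HSN : Titer Y1 t A (N, snd x)) by (apply IS, H1, IC, Ca).
      assert (S a <= a).
      { replace a with (length lS) at 2 by lia. rewrite <- (length_seq (S a) N).
        apply NoDup_incl_length; [apply seq_NoDup|]. intros k Hk. apply in_seq in Hk. apply IS.
        pose proof (Titer_swap Y1 A N k (fresh_inv A N k HA ltac:(lia)) t (N, snd x)) as Hsw.
        apply Hsw in HSN. unfold swp, sw in HSN. simpl in HSN. rewrite Nat.eqb_refl in HSN. exact HSN. }
      lia. }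
  intros x. destruct (Hsp x) as [t Ht]. apply (Claim t x Ht).
Qed.

Lemma card_ext (P Q : pset) n : (forall x, P x <-> Q x) -> card_is P n -> card_is Q n.
Proof. intros H [l [Hn [Hi Hl]]]. exists l. repeat split; auto; intros; [apply H, Hi| apply Hi, H]; auto. Qed.

Lemma card_unique (P : pset) n1 n2 : card_is P n1 -> card_is P n2 -> n1 = n2.
Proof. intros [l1 [N1 [I1 L1]]] [l2 [N2 [I2 L2]]]. subst. apply len_unique; auto.
  intros k; rewrite I1, I2; tauto. Qed.

Lemma card_union (P Q : pset) n1 n2 : card_is P n1 -> card_is Q n2 -> (forall x, P x -> ~ Q x) ->
  card_is (fun x => P x \/ Q x) (n1 + n2).
Proof. intros [l1 [N1 [I1 L1]]] [l2 [N2 [I2 L2]]] HD. exists (l1 ++ l2). split; [|split].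
  - apply NoDup_app; auto. intros x H1 H2. apply (HD x); [apply I1|apply I2]; auto.
  - intros x. rewrite in_app_iff, I1, I2. tauto.
  - rewrite length_app. lia. Qed.

Lemma Titer_extZ (Z Z' A : pset) : (forall y, Z y <-> Z' y) -> forall t y, Titer Z t A y <-> Titer Z' t A y.
Proof. intros HZ t; induction t; simpl; intros y; [tauto|]. unfold Tstep.
  assert (HC : forall S x, counts_in Z S x <-> counts_in Z' S x).
  { intros S x; unfold counts_in. split; intros [r [c [H1 [H2 H3]]]]; exists r, c; repeat split; auto; apply HZ; auto. }
  split; intros [H|[H1 H2]].
  - left; apply IHt; auto.
  - right; split; [rewrite <- IHt; auto|]. intro Hc. apply H2. apply HC.
    eapply counts_ext; [|exact Hc]. intros; rewrite IHt; tauto.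
  - left; apply IHt; auto.
  - right; split; [rewrite IHt; auto|]. intro Hc. apply H2. apply HC.
    eapply counts_ext; [|exact Hc]. intros; rewrite IHt; tauto.
Qed.

Lemma spans_extZ (Z Z' A : pset) : (forall y, Z y <-> Z' y) -> spans Z A -> spans Z' A.
Proof. intros HZ Hs x. destruct (Hs x) as [t Ht]. exists t. apply (Titer_extZ Z Z' A HZ); auto. Qed.

Definition Ext (Y1 Y2 : pset) : Prop :=
  forall A : list pt, NoDup A -> spans Y1 (lset A) ->
  exists A2 : list pt, NoDup A2 /\ incl A A2 /\ spans Y2 (lset A2) /\
   (exists k, card_is (setD Y2 Y1) k /\ length A2 = length A + k) /\
   (thin (lset A) -> thin (lset A2)).

Lemma Ext_refl Y : Ext Y Y.
Proof. intros A HN Hs. exists A. repeat split; auto; [intros x; auto|].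
  exists 0. split; [|lia]. exists []. repeat split; simpl; try tauto; [constructor| unfold setD; tauto]. Qed.

Lemma Ext_trans Y1 Y2 Y3 : (forall x, Y1 x -> Y2 x) -> (forall x, Y2 x -> Y3 x) ->
  Ext Y1 Y2 -> Ext Y2 Y3 -> Ext Y1 Y3.
Proof. intros H12 H23 E1 E2 A HN Hs.
  destruct (E1 A HN Hs) as [A2 [N2 [I2 [S2 [[k2 [C2 L2]] T2]]]]].
  destruct (E2 A2 N2 S2) as [A3 [N3 [I3 [S3 [[k3 [C3 L3]] T3]]]]].
  exists A3. repeat split; auto.
  - intros x Hx; auto.
  - exists (k3 + k2). split; [|lia].
    eapply card_ext; [|apply (card_union _ _ _ _ C3 C2)].
    + intros x. unfold setD. split.
      * intros [[H1 H2]|[H1 H2]]; split; auto.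
      * intros [H1 H2]. destruct (classic (Y2 x)); [right|left]; auto.
    + unfold setD. intros x [_ H] [H' _]. auto.
Qed.

Lemma Ext_equiv Y1 Y2 Y1' Y2' : (forall x, Y1 x <-> Y1' x) -> (forall x, Y2 x <-> Y2' x) ->
  Ext Y1 Y2 -> Ext Y1' Y2'.
Proof. intros H1 H2 E A HN Hs.
  destruct (E A HN) as [A2 [N2 [I2 [S2 [[k2 [C2 L2]] T2]]]]].
  { eapply spans_extZ; [|exact Hs]. intros; rewrite H1; tauto. }
  exists A2. repeat split; auto.
  - eapply spans_extZ; [|exact S2]. auto.
  - exists k2. split; auto. eapply card_ext; [|exact C2]. intros x; unfold setD; rewrite H1, H2; tauto.
Qed.

Fixpoint bnd (l : list pt) : nat := match l with [] => 1 | x :: l' => fst x + snd x + bnd l' end.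
Lemma bnd_pos l : 1 <= bnd l.
Proof. induction l; simpl; lia. Qed.
Lemma bnd_spec l x : In x l -> fst x < bnd l /\ snd x < bnd l.
Proof. induction l; simpl; [tauto|]. intros [<-|H]; [pose proof (bnd_pos l); lia|apply IHl in H; lia]. Qed.

Lemma stepV_list (Y1 Y2 : pset) (a m K : nat) :
  (forall r c r' c', Y2 (r,c) -> r' <= r -> c' <= c -> Y2 (r',c')) ->
  (forall r c, Y2 (r,c) -> r < K /\ c < K) ->
  (forall r c, Y2 (r,c) -> ~ Y1 (r,c) -> a <= r) ->
  (forall r c, Y2 (r,c) -> r <= a) ->
  (forall c, Y2 (a,c) -> c < m) ->
  forall A : list pt, NoDup A -> spans Y1 (lset A) ->
  exists A2, NoDup A2 /\ incl A A2 /\ spans Y2 (lset A2) /\ length A2 = length A + m /\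
    (thin (lset A) -> thin (lset A2)).
Proof.
  intros Hd HK H2 H3 H4 A HN Hs.
  set (N := bnd A).
  set (B := map (fun c => (N, N + c)) (seq 0 m)).
  assert (HB : forall x, In x B <-> fst x = N /\ N <= snd x < N + m).
  { intros [i j]. unfold B. rewrite in_map_iff. split.
    - intros [c [He Hc]]. injection He as E1 E2; subst i j. apply in_seq in Hc. simpl. lia.
    - simpl. intros [-> Hj]. exists (j - N). split; [f_equal; lia| apply in_seq; lia]. }
  exists (A ++ B). split; [|split; [|split; [|split]]].
  - apply NoDup_app; auto.
    + unfold B. apply Injective_map_NoDup; [intros x y H; inversion H; lia| apply seq_NoDup].
    + intros x Hx HxB. apply HB in HxB. apply bnd_spec in Hx. fold N in Hx. lia.
  - intros x Hx; apply in_app_iff; auto.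
  - eapply spans_ext; [|apply (stepV Y1 Y2 (lset A) a m N K Hd HK H2 H3 H4)].
    + intros x. unfold lset. rewrite in_app_iff, HB. tauto.
    + intros x Hx. apply bnd_spec in Hx. apply Hx.
    + exact Hs.
  - rewrite length_app. unfold B. rewrite length_map, length_seq. lia.
  - intros Ht x Hx. unfold lset in Hx. apply in_app_iff in Hx. destruct Hx as [Hx|Hx].
    + destruct (Ht x Hx) as [Hh|Hv]; [left|right]; intros y Hy He; unfold lset in Hy; apply in_app_iff in Hy;
      destruct Hy as [Hy|Hy]; auto; apply HB in Hy; apply bnd_spec in Hx; fold N in Hx; lia.
    + left. intros y Hy He. apply HB in Hx. apply in_app_iff in Hy. destruct Hy as [Hy|Hy].
      * apply bnd_spec in Hy; fold N in Hy; lia.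
      * apply HB in Hy. destruct x, y; simpl in *; f_equal; lia.
Qed.

Definition tr (x : pt) : pt := (snd x, fst x).
Lemma tr_tr x : tr (tr x) = x.
Proof. destruct x; auto. Qed.
Lemma in_map_tr l y : In y (map tr l) <-> In (tr y) l.
Proof. rewrite in_map_iff. split; [intros [x [<- Hx]]; rewrite tr_tr; auto| intros H; exists (tr y); rewrite tr_tr; auto]. Qed.

Lemma counts_tr Z (S S' : pset) x : (forall y, S' y <-> S (tr y)) ->
  (counts_in Z S x <-> counts_in (fun y => Z (tr y)) S' (tr x)).
Proof. intros HS. destruct x as [i j]. unfold counts_in, row_is, col_is, tr; simpl. split.
  - intros [r [c [[l1 [N1 [I1 L1]]] [[l2 [N2 [I2 L2]]] HZ]]]]. exists c, r. split; [|split; auto].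
    + exists l2. repeat split; auto; intros H; [apply HS; apply I2; auto| apply I2; apply HS in H; exact H].
    + exists l1. repeat split; auto; intros H; [apply HS; apply I1; auto| apply I1; apply HS in H; exact H].
  - intros [r [c [[l1 [N1 [I1 L1]]] [[l2 [N2 [I2 L2]]] HZ]]]]. exists c, r. split; [|split; auto].
    + exists l2. repeat split; auto; intros H; [apply I2 in H; apply HS in H; exact H| apply I2, HS; exact H].
    + exists l1. repeat split; auto; intros H; [apply I1 in H; apply HS in H; exact H| apply I1, HS; exact H].
Qed.

Lemma Titer_tr Z A : forall t x, Titer Z t A x <-> Titer (fun y => Z (tr y)) t (fun y => A (tr y)) (tr x).
Proof. induction t; intros x; simpl; [rewrite tr_tr; tauto|]. unfold Tstep.
  assert (HS : forall y, Titer (fun y => Z (tr y)) t (fun y => A (tr y)) y <-> Titer Z t A (tr y)).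
  { intros y. rewrite (IHt (tr y)), tr_tr. tauto. }
  rewrite (counts_tr Z _ _ x HS), IHt. tauto. Qed.

Lemma thin_tr l : thin (lset l) -> thin (lset (map tr l)).
Proof. intros Ht x Hx. unfold lset in *. apply in_map_tr in Hx. destruct (Ht _ Hx) as [H|H]; [right|left];
  intros y Hy He; apply in_map_tr in Hy; destruct x, y; simpl in *;
  specialize (H _ Hy); simpl in H; specialize (H He); inversion H; auto. Qed.

Definition W (Z : pset) p q : pset := fun x => Z x /\ fst x < p /\ snd x < q.

Lemma nat_cut (P : nat -> Prop) K : (forall c c', P c -> c' <= c -> P c') -> (forall c, P c -> c < K) ->
  exists m, forall c, P c <-> c < m.
Proof. revert P; induction K; intros P Hd Hb.
 - exists 0; intros c; split; intros H; [apply Hb in H|]; lia.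
 - destruct (classic (P K)) as [HK|HK].
   + exists (S K). intros c; split; intros H; [apply Hb in H; lia| apply (Hd K); auto; lia].
   + apply IHK; auto. intros c Hc. assert (c <> K) by (intro; subst; auto). apply Hb in Hc. lia.
Qed.

Lemma stepA Z K p q : (forall r c r' c', Z (r,c) -> r' <= r -> c' <= c -> Z (r',c')) ->
  (forall r c, Z (r,c) -> r < K /\ c < K) -> Ext (W Z p q) (W Z (S p) q).
Proof. intros Hd HK A HN Hs.
  destruct (nat_cut (fun c => Z (p,c) /\ c < q) K) as [m Hm].
  { intros c c' [H1 H2] H. split; [eapply Hd; eauto|lia]. }
  { intros c [H _]. apply HK in H. lia. }
  destruct (stepV_list (W Z p q) (W Z (S p) q) p m K) with (A := A) as [A2 [N2 [I2 [S2 [L2 T2]]]]]; auto.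
  - intros r c r' c' [H1 [H2 H3]] Hr Hc. split; [eapply Hd; eauto|simpl in *; lia].
  - intros r c [H _]. apply HK; auto.
  - intros r c [H1 [H2 H3]] H. simpl in *. destruct (Nat.le_gt_cases p r); auto. exfalso. apply H. split; auto; simpl; lia.
  - intros r c [H1 [H2 H3]]. simpl in *; lia.
  - intros c [H1 [H2 H3]]. apply Hm. simpl in *; auto.
  - exists A2. repeat split; auto. exists m. split; auto.
    exists (map (fun c => (p,c)) (seq 0 m)). split; [|split].
    + apply Injective_map_NoDup; [intros x y H; inversion H; auto|apply seq_NoDup].
    + intros [i j]. rewrite in_map_iff. unfold setD, W; simpl. split.
      * intros [c [He Hc]]. assert (i = p) by congruence. assert (j = c) by congruence. subst i j. apply in_seq in Hc. assert (Z (p,c) /\ c < q) by (apply Hm; lia). intuition lia.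
      * intros [[H1 [H2 H3]] H4]. assert (i = p) by (destruct (Nat.eq_dec i p); auto; exfalso; apply H4; intuition lia). subst.
        exists j. split; auto. apply in_seq. assert (j < m) by (apply Hm; auto). lia.
    + rewrite length_map, length_seq; auto.
Qed.

Lemma stepB Z K p q : (forall r c r' c', Z (r,c) -> r' <= r -> c' <= c -> Z (r',c')) ->
  (forall r c, Z (r,c) -> r < K /\ c < K) -> Ext (W Z p q) (W Z p (S q)).
Proof. intros Hd HK A HN Hs.
  destruct (nat_cut (fun r => Z (r,q) /\ r < p) K) as [m Hm].
  { intros c c' [H1 H2] H. split; [eapply Hd; eauto|lia]. }
  { intros c [H _]. apply HK in H. lia. }
  set (Y1 := fun y => W Z p q (tr y)). set (Y2 := fun y => W Z p (S q) (tr y)).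
  assert (Hs' : spans Y1 (lset (map tr A))).
  { intros x. destruct (Hs (tr x)) as [t Ht]. exists t. apply Titer_tr in Ht. rewrite tr_tr in Ht.
    eapply Titer_ext; [|exact Ht]. intros y. unfold lset. rewrite in_map_tr. tauto. }
  destruct (stepV_list Y1 Y2 q m K) with (A := map tr A) as [A2 [N2 [I2 [S2 [L2 T2]]]]]; auto.
  - unfold Y2, W, tr; simpl. intros r c r' c' [H1 [H2 H3]] Hr Hc. split; [eapply Hd; eauto|lia].
  - unfold Y2, W, tr; simpl. intros r c [H _]. apply HK in H; lia.
  - unfold Y1, Y2, W, tr; simpl. intros r c [H1 [H2 H3]] H. destruct (Nat.le_gt_cases q r); auto. exfalso. apply H. split; auto; lia.
  - unfold Y2, W, tr; simpl. intros r c [H1 [H2 H3]]. lia.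
  - unfold Y2, W, tr; simpl. intros c [H1 [H2 H3]]. apply Hm. auto.
  - apply Injective_map_NoDup; auto. intros x y H. rewrite <- (tr_tr x), <- (tr_tr y), H; auto.
  - exists (map tr A2). split; [|split; [|split; [|split]]].
    + apply Injective_map_NoDup; auto. intros x y H. rewrite <- (tr_tr x), <- (tr_tr y), H; auto.
    + intros x Hx. apply in_map_tr. apply I2. apply in_map_tr. rewrite tr_tr. auto.
    + intros x. destruct (S2 (tr x)) as [t Ht]. exists t. apply Titer_tr in Ht. rewrite tr_tr in Ht.
      eapply Titer_extZ; [|eapply Titer_ext; [|exact Ht]].
      * intros y. unfold Y2. rewrite tr_tr. tauto.
      * intros y. unfold lset. rewrite in_map_tr. tauto.
    + exists m. split; [|rewrite length_map, L2, length_map; auto].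
      exists (map (fun r => (r,q)) (seq 0 m)). split; [|split].
      * apply Injective_map_NoDup; [intros x y H; inversion H; auto|apply seq_NoDup].
      * intros [i j]. rewrite in_map_iff. unfold setD, W; simpl. split.
        -- intros [c [He Hc]]. assert (i = c) by congruence. assert (j = q) by congruence. subst i j. apply in_seq in Hc. assert (Z (c,q) /\ c < p) by (apply Hm; lia). intuition lia.
        -- intros [[H1 [H2 H3]] H4]. assert (j = q) by (destruct (Nat.eq_dec j q); auto; exfalso; apply H4; intuition lia). subst.
           exists i. split; auto. apply in_seq. assert (i < m) by (apply Hm; auto). lia.
      * rewrite length_map, length_seq; auto.
    + intros Ht. apply thin_tr. apply T2. apply thin_tr. exact Ht.
Qed.

Lemma chainA Z K p q n : (forall r c r' c', Z (r,c) -> r' <= r -> c' <= c -> Z (r',c')) ->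
  (forall r c, Z (r,c) -> r < K /\ c < K) -> Ext (W Z p q) (W Z (p+n) q).
Proof. intros Hd HK. induction n.
  - rewrite Nat.add_0_r. apply Ext_refl.
  - replace (p + S n) with (S (p + n)) by lia.
    apply (Ext_trans _ (W Z (p+n) q)); auto.
    + intros x [H1 [H2 H3]]. split; auto; split; auto; lia.
    + intros x [H1 [H2 H3]]. split; auto; split; auto; lia.
    + apply stepA with K; auto.
Qed.

Lemma chainB Z K p q n : (forall r c r' c', Z (r,c) -> r' <= r -> c' <= c -> Z (r',c')) ->
  (forall r c, Z (r,c) -> r < K /\ c < K) -> Ext (W Z p q) (W Z p (q+n)).
Proof. intros Hd HK. induction n.
  - rewrite Nat.add_0_r. apply Ext_refl.
  - replace (q + S n) with (S (q + n)) by lia.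
    apply (Ext_trans _ (W Z p (q+n))); auto.
    + intros x [H1 [H2 H3]]. split; auto; split; auto; lia.
    + intros x [H1 [H2 H3]]. split; auto; split; auto; lia.
    + apply stepB with K; auto.
Qed.

Lemma thin_ext (A B : pset) : (forall x, A x <-> B x) -> thin A -> thin B.
Proof. intros H Ht x Hx. apply H in Hx. destruct (Ht x Hx) as [H1|H1]; [left|right]; intros y Hy He; apply H1; auto; apply H; auto. Qed.

Theorem mainTheorem8 (Z : pset) (a b : extpos) :
  is_zero_set Z -> finite_set Z -> valid_ext a -> valid_ext b ->
  (forall (A' : list pt), NoDup A' -> spans (setI Z (rect a b)) (lset A') ->
     exists A : list pt, NoDup A /\ incl A' A /\ spans Z (lset A) /\
       (exists k, card_is (setD Z (rect a b)) k /\ length A = length A' + k) /\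
       (thin (lset A') -> thin (lset A))) /\
  (forall k g1 g2, card_is (setD Z (rect a b)) k ->
     is_gamma (setI Z (rect a b)) g1 -> is_gamma Z g2 -> g2 - k <= g1) /\
  (forall k g1 g2, card_is (setD Z (rect a b)) k ->
     is_gamma_thin (setI Z (rect a b)) g1 -> is_gamma_thin Z g2 -> g2 - k <= g1).
Proof.
  intros HZ [n [lz [Hnd [Hin Hlen]]]] Ha Hb.
  assert (Hd : forall r c r' c', Z (r,c) -> r' <= r -> c' <= c -> Z (r',c')).
  { destruct HZ as [I [ab [Hv Hab]]]. intros r c r' c' H Hr Hc. apply Hab in H. destruct H as [i [H1 H2]].
    apply Hab. exists i. unfold rect in *; simpl in *.
    split; [destruct (fst (ab i)) | destruct (snd (ab i))]; simpl in *; auto; lia. }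
  set (K := bnd lz).
  assert (HK : forall r c, Z (r,c) -> r < K /\ c < K).
  { intros r c H. apply Hin in H. apply bnd_spec in H. exact H. }
  set (a' := match a with Some k => Nat.min k K | None => K end).
  set (b' := match b with Some k => Nat.min k K | None => K end).
  assert (Ha' : a' <= K) by (unfold a'; destruct a; lia).
  assert (Hb' : b' <= K) by (unfold b'; destruct b; lia).
  assert (E0 : Ext (W Z a' b') (W Z K K)).
  { apply (Ext_trans _ (W Z K b')).
    - intros x [H1 [H2 H3]]. split; auto; split; auto; lia.
    - intros x [H1 [H2 H3]]. split; auto; split; auto; lia.
    - pose proof (chainA Z K a' b' (K - a') Hd HK) as E. replace (a' + (K - a')) with K in E by lia. exact E.
    - pose proof (chainB Z K K b' (K - b') Hd HK) as E. replace (b' + (K - b')) with K in E by lia. exact E. }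
  assert (E : Ext (setI Z (rect a b)) Z).
  { eapply Ext_equiv; [| |exact E0].
    - intros [i j]. unfold W, setI, rect; simpl. split.
      + intros [H1 [H2 H3]]. pose proof (HK _ _ H1). split; auto. unfold a', b' in *.
        split; [destruct a | destruct b]; simpl; lia.
      + intros [H1 [H2 H3]]. pose proof (HK _ _ H1). split; auto. unfold a', b' in *.
        split; [destruct a | destruct b]; simpl in *; lia.
    - intros [i j]. unfold W; simpl. split; [tauto|]. intros H; pose proof (HK _ _ H); tauto. }
  assert (Hsd : forall x, setD Z (setI Z (rect a b)) x <-> setD Z (rect a b) x).
  { intros x; unfold setD, setI. tauto. }
  split; [|split].
  - intros A' HN Hs. destruct (E A' HN Hs) as [A2 [N2 [I2 [S2 [[k [C2 L2]] T2]]]]].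
    exists A2. repeat split; auto. exists k. split; auto. eapply card_ext; [|exact C2]. exact Hsd.
  - intros k g1 g2 Hk [[A1 [[l [Hnl [Hil Hll]]] Hs1]] _] [_ Hmin].
    assert (Hs' : spans (setI Z (rect a b)) (lset l)).
    { eapply spans_ext; [|exact Hs1]. intros x; unfold lset; rewrite Hil; tauto. }
    destruct (E l Hnl Hs') as [A2 [N2 [I2 [S2 [[k' [C2 L2]] T2]]]]].
    assert (k' = k) by (eapply card_unique; [eapply card_ext; [exact Hsd|exact C2]| exact Hk]). subst k'.
    assert (g2 <= length A2).
    { apply (Hmin (lset A2)); auto. exists A2. repeat split; auto. }
    lia.
  - intros k g1 g2 Hk [[A1 [[l [Hnl [Hil Hll]]] [Ht1 Hs1]]] _] [_ Hmin].
    assert (Hs' : spans (setI Z (rect a b)) (lset l)).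
    { eapply spans_ext; [|exact Hs1]. intros x; unfold lset; rewrite Hil; tauto. }
    destruct (E l Hnl Hs') as [A2 [N2 [I2 [S2 [[k' [C2 L2]] T2]]]]].
    assert (k' = k) by (eapply card_unique; [eapply card_ext; [exact Hsd|exact C2]| exact Hk]). subst k'.
    assert (g2 <= length A2).
    { apply (Hmin (lset A2)); auto.
      - exists A2. repeat split; auto.
      - apply T2. eapply thin_ext; [|exact Ht1]. intros x; unfold lset; rewrite Hil; tauto. }
    lia.
Qed.
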